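(* Let $\Lambda\subseteq\mathbb Z^D$ be a lattice that induces a lattice tiling of the shape $\mathcal S$, and let $\delta=(d_1,\dots,d_D)$ be a nonzero ternary vector. Then $(\Lambda,\mathcal S,\delta)$ defines a folding if and only if both of the following hold: <ul> <li>$|\mathcal S|\delta-c(|\mathcal S|\delta)=(0,\dots,0)$;</li> <li>for every integer $i$ with $0<i<|\mathcal S|$, $i\delta-c(i\delta)\neq(0,\dots,0)$.</li> </ul> Here $i\delta=(id_1,\dots,id_D)$.
   Context: Let $D\ge 1$. A shape is a finite nonempty set $\mathcal S\subset\mathbb Z^D$ containing the origin; the origin is its distinguished center point. A lattice is a set $\Lambda=\{\sum_{j=1}^D u_jv_j : u_1,\dots,u_D\in\mathbb Z\}$ for linearly independent $v_1,\dots,v_D\in\mathbb Z^D$. The $D\times D$ matrix $G$ whose rows are $v_1,\dots,v_D$ is a generator matrix of $\Lambda$. $\Lambda$ induces a lattice tiling of $\mathcal S$ if the translates $\mathcal S+\lambda$, $\lambda\in\Lambda$, are pairwise disjoint and cover $\mathbb Z^D$. The translate $\mathcal S+\lambda$ is called the copy of $\mathcal S$ with center $\lambda$. For $x\in\mathbb Z^D$, $c(x)$ denotes the unique $\lambda\in\Lambda$ with $x\in\mathcal S+\lambda$. A ternary vector (direction) is a nonzero $\delta\in\{-1,0,+1\}^D$. The folded-row of $(\Lambda,\mathcal S,\delta)$ is the sequence $p_0,p_1,p_2,\dots$ defined by $p_0=0$ and $p_{k+1}=(p_k+\delta)-c(p_k+\delta)$. Equivalently, $p_{k+1}=p_k+\delta$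 if $p_k+\delta\in\mathcal S$; otherwise $p_{k+1}$ is $p_k+\delta$ minus the center of the copy of $\mathcal S$ containing $p_k+\delta$. The triple $(\Lambda,\mathcal S,\delta)$ defines a folding if every element of $\mathcal S$ occurs in its folded-row. *)

(* Defs.v *)
From HB Require Import structures.
From mathcomp Require Import all_boot all_order all_algebra.
From Stdlib Require Import ClassicalEpsilon.
Set Implicit Arguments. Unset Strict Implicit. Unset Printing Implicit Defensive.
Import Order.TTheory GRing.Theory Num.Theory.
Local Open Scope ring_scope.

Definition is_shape (D : nat) (S : seq 'rV[int]_D) : Prop :=
  uniq S /\ (0 : 'rV[int]_D) \in S.

Definition is_generator (D : nat) (G : 'M[int]_D) : Prop :=
  row_free (map_mx (fun z : int => z%:~R : rat) G).

Definition in_lattice (D : nat) (G : 'M[int]_D) (x : 'rV[int]_D) : Prop :=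
  exists u : 'rV[int]_D, x = u *m G.

Definition lattice_tiling (D : nat) (G : 'M[int]_D) (S : seq 'rV[int]_D) : Prop :=
  forall x : 'rV[int]_D, exists! l : 'rV[int]_D, in_lattice G l /\ (x - l) \in S.

(* c(x): the center of the copy of S containing x (unique under tiling). *)
Definition center (D : nat) (G : 'M[int]_D) (S : seq 'rV[int]_D) (x : 'rV[int]_D)
  : 'rV[int]_D :=
  epsilon (inhabits 0) (fun l => in_lattice G l /\ (x - l) \in S).

Definition ternary (D : nat) (d : 'rV[int]_D) : Prop :=
  d != 0 /\ forall j, d 0 j \in [:: -1; 0; 1].

Definition folded_row (D : nat) (G : 'M[int]_D) (S : seq 'rV[int]_D) (d : 'rV[int]_D)
  (k : nat) : 'rV[int]_D :=
  iter k (fun p => (p + d) - center G S (p + d)) 0.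

Definition defines_folding (D : nat) (G : 'M[int]_D) (S : seq 'rV[int]_D)
  (d : 'rV[int]_D) : Prop :=
  forall s, s \in S -> exists k, folded_row G S d k = s.

(* Main.v *)
Require Import Defs.
From HB Require Import structures.
From mathcomp Require Import all_boot all_order all_algebra.
From Stdlib Require Import ClassicalEpsilon.
Import Order.TTheory GRing.Theory Num.Theory.
Local Open Scope ring_scope.
Set Implicit Arguments. Unset Strict Implicit.

Section Aux.
Variables (D : nat) (G : 'M[int]_D) (S : seq 'rV[int]_D).
Hypothesis HS : is_shape S.
Hypothesis HT : lattice_tiling G S.

Lemma lat0 : in_lattice G 0.
Proof. by exists 0; rewrite mul0mx. Qed.

Lemma latD x y : in_lattice G x -> in_lattice G y -> in_lattice G (x + y).
Proof. by move=> [u ->] [v ->]; exists (u + v); rewrite mulmxDl. Qed.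

Lemma latN x : in_lattice G x -> in_lattice G (- x).
Proof. by move=> [u ->]; exists (- u); rewrite mulNmx. Qed.

Lemma latB x y : in_lattice G x -> in_lattice G y -> in_lattice G (x - y).
Proof. by move=> hx hy; apply: latD => //; apply: latN. Qed.

Lemma latMn x n : in_lattice G x -> in_lattice G (x *+ n).
Proof.
move=> hx; elim: n => [|n IH]; first by rewrite mulr0n; apply: lat0.
by rewrite mulrS; apply: latD.
Qed.

Lemma center_spec x : in_lattice G (center G S x) /\ x - center G S x \in S.
Proof.
rewrite /center; apply: (@epsilon_spec _ (inhabits 0) (fun l => in_lattice G l /\ (x - l) \in S)).
by have [l [Hl _]] := HT x; exists l.
Qed.

Lemma center_uniq x l : in_lattice G l -> x - l \in S -> center G S x = l.
Proof.
move=> hl hs; have [l0 [_ Hu]] := HT x.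
by rewrite -(Hu _ (center_spec x)) (Hu l).
Qed.

Definition r x := x - center G S x.

Lemma rS x : r x \in S.
Proof. exact: (center_spec x).2. Qed.

Lemma r_eq x y : r x = r y <-> in_lattice G (x - y).
Proof.
split.
  move=> E.
  have -> : x - y = center G S x - center G S y.
    rewrite -{1}(subrK (center G S x) x) -{1}(subrK (center G S y) y) -/(r x) -/(r y) E.
    by rewrite opprD addrACA subrr add0r.
  by apply: latB; [apply: (center_spec x).1|apply: (center_spec y).1].
move=> hl.
have E : center G S x = center G S y + (x - y).
  apply: center_uniq; first by apply: latD => //; apply: (center_spec y).1.
  have -> : x - (center G S y + (x - y)) = y - center G S y.
    by rewrite opprD opprB addrCA [x + _]addrCA subrr addr0 addrC.
  exact: (center_spec y).2.
by rewrite /r E opprD opprB addrCA [x + _]addrCA subrr addr0 addrC.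
Qed.

Lemma r0 : r 0 = 0.
Proof.
have h0 : (0 : 'rV[int]_D) - 0 \in S by rewrite subr0; case: HS.
by rewrite /r (@center_uniq 0 0 lat0 h0) subr0.
Qed.

Lemma r_zero x : r x = 0 <-> in_lattice G x.
Proof. by rewrite -r0 r_eq subr0. Qed.

Lemma folded_r d k : folded_row G S d k = r (d *+ k).
Proof.
elim: k => [|k IH]; first by rewrite /folded_row /= mulr0n r0.
rewrite /folded_row iterS -/(folded_row G S d k) IH.
rewrite -/(r (r (d *+ k) + d)); apply/r_eq.
have -> : r (d *+ k) + d - d *+ k.+1 = - center G S (d *+ k).
  by rewrite mulrSr /r opprD addrACA subrr addr0 addrAC subrr add0r.
apply: latN; exact: (center_spec _).1.
Qed.

Lemma inj_uniq d N : (forall m, (0 < m < N)%N -> ~ in_lattice G (d *+ m)) ->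
  uniq [seq r (d *+ i) | i <- iota 0 N].
Proof.
move=> H; rewrite map_inj_in_uniq ?iota_uniq // => i j.
rewrite !mem_iota !add0n => /andP[_ hi] /andP[_ hj] E.
case: (ltngtP i j) => // hij.
- exfalso; apply: (H (j - i)%N).
    rewrite subn_gt0 hij (leq_ltn_trans (leq_subr i j) hj) //.
  rewrite (mulrnBr d (ltnW hij)).
  by apply/r_eq; rewrite E.
- exfalso; apply: (H (i - j)%N).
    rewrite subn_gt0 hij (leq_ltn_trans (leq_subr j i) hi) //.
  rewrite (mulrnBr d (ltnW hij)).
  by apply/r_eq.
Qed.
End Aux.

Theorem lemma3 (D : nat) (G : 'M[int]_D) (S : seq 'rV[int]_D) (d : 'rV[int]_D) :
  (0 < D)%N -> is_generator G -> is_shape S -> lattice_tiling G S -> ternary d ->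
  (defines_folding G S d <->
   (d *+ size S - center G S (d *+ size S) = 0 /\
    forall i : nat, (0 < i < size S)%N -> d *+ i - center G S (d *+ i) != 0)).
Proof.
move=> _ _ HS HT _.
have HSu : uniq S by case: HS.
rewrite /defines_folding.
split; last first.
  move=> [_ Hi] s hs.
  set L := [seq r G S (d *+ i) | i <- iota 0 (size S)].
  have uL : uniq L.
    apply: (inj_uniq HT) => m hm /(r_zero HS HT) hz.
    by move: (Hi m hm); rewrite -/(r G S _) hz eqxx.
  have sub : {subset L <= S} by move=> x /mapP [i _ ->]; apply: (rS HT).
  have hsz : (size S <= size L)%N by rewrite size_map size_iota.
  have [_ E] := uniq_min_size uL sub hsz.
  move: hs; rewrite -E => /mapP [i _ ->]; exists i; exact: (folded_r HS HT).
move=> Hf.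
have Hf' : forall s, s \in S -> exists k, r G S (d *+ k) = s.
  by move=> s /Hf [k <-]; exists k; rewrite (folded_r HS HT).
set P := fun m => (0 < m)%N && (r G S (d *+ m) == 0).
have exP0 : exists2 m, P m & (m <= size S)%N.
  case hh: (has P (iota 1 (size S))).
    by move/hasP: hh => [m hm Pm]; exists m => //; move: hm; rewrite mem_iota add1n ltnS => /andP[].
  exfalso.
  have uL : uniq [seq r G S (d *+ i) | i <- iota 0 (size S).+1].
    apply: (inj_uniq HT) => m /andP[m0 hm] /(r_zero HS HT) hz.
    move/hasPn: hh => /(_ m); rewrite mem_iota m0 add1n hm /P m0 hz eqxx => /(_ isT).
    done.
  have sub : {subset [seq r G S (d *+ i) | i <- iota 0 (size S).+1] <= S}.
    by move=> x /mapP [i _ ->]; apply: (rS HT).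
  have := uniq_leq_size uL sub.
  by rewrite size_map size_iota ltnn.
have [m1 Pm1 hm1] := exP0.
have exP : exists m, P m by exists m1.
case: (ex_minnP exP) => m /andP[m0 /eqP Pm] Hmin.
have mle : (m <= size S)%N by apply: leq_trans (Hmin _ Pm1) hm1.
have lem : (size S <= m)%N.
  set L := [seq r G S (d *+ i) | i <- iota 0 m].
  have -> : m = size L by rewrite size_map size_iota.
  apply: uniq_leq_size => // s /Hf' [k <-].
  apply/mapP; exists (k %% m)%N; first by rewrite mem_iota add0n ltn_pmod.
  apply/(r_eq HT).
  rewrite {1}(divn_eq k m) mulrnDr addrK mulnC mulrnA.
  apply: latMn; exact/(r_zero HS HT).
have Em : m = size S by apply/eqP; rewrite eqn_leq mle lem.
split; first by rewrite -Em.
move=> i /andP[i0 hi]; apply/negP => /eqP hz.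
have : (m <= i)%N by apply: Hmin; rewrite /P i0 /=; apply/eqP; exact: hz.
by rewrite Em leqNgt hi.
Qed.
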